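(* Let $\mathcal D\subset\mathbb{R}^d$ be a linear subspace with orthonormal basis given by the columns of $\mathbf V$, so that $\mathbf P=\mathbf V\mathbf V^T$ is the orthogonal projection onto $\mathcal D$. Let $\boldsymbol\theta\in\mathbb{R}^{d\times d}$ be invertible and let $\hat{\mathbf P}$ be the orthogonal projection onto $\boldsymbol\theta\mathcal D=\{\boldsymbol\theta\mathbf x:\mathbf x\in\mathcal D\}$. Then $$\|\boldsymbol\theta^{-1}\hat{\mathbf P}\boldsymbol\theta-\mathbf P\|_2\le\big(1+\kappa(\boldsymbol\theta)^2\big)\,\|\mathbf I-\boldsymbol\theta^T\boldsymbol\theta\|_2.$$
   Context: $\|\cdot\|_2$ denotes the spectral (operator 2-) norm and $\kappa(\boldsymbol\theta)=\|\boldsymbol\theta\|_2\|\boldsymbol\theta^{-1}\|_2$ the condition number. *)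

(* Defs.v *)
From mathcomp Require Import all_boot all_order all_algebra.
From mathcomp Require Import all_classical all_reals.
Set Implicit Arguments. Unset Strict Implicit. Unset Printing Implicit Defensive.
Import Order.TTheory GRing.Theory Num.Theory.
Local Open Scope ring_scope.
Local Open Scope classical_set_scope.

Definition vnorm (R : realType) (n : nat) (x : 'cV[R]_n) : R :=
  Num.sqrt (\sum_(i < n) x i 0 ^+ 2).

Definition opnorm (R : realType) (m n : nat) (A : 'M[R]_(m, n)) : R :=
  sup [set vnorm (A *m x) | x in [set x : 'cV[R]_n | vnorm x <= 1]].

Definition cond (R : realType) (n : nat) (A : 'M[R]_n) : R :=
  opnorm A * opnorm (invmx A).

(* Q is the orthogonal projection onto the column space of A:
   symmetric, idempotent, with column space equal to that of A. *)
Definition is_orth_proj (R : realType) (d k : nat)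
  (Q : 'M[R]_d) (A : 'M[R]_(d, k)) : Prop :=
  [/\ Q^T = Q, Q *m Q = Q & (Q^T == A^T)%MS].

(* Main.v *)
Require Import Defs.
From mathcomp Require Import all_boot all_order all_algebra.
From mathcomp Require Import all_classical all_reals.
From mathcomp Require Import ring lra.
Import Order.TTheory GRing.Theory Num.Theory.
Local Open Scope ring_scope.
Definition dot {R : realType} {n : nat} (u v : 'cV[R]_n) : R :=
  \sum_(i < n) u i 0 * v i 0.

Lemma dot_mxE {R : realType} {n : nat} (u v : 'cV[R]_n) :
  dot u v = (u^T *m v) 0 0.
Proof. by rewrite mxE; apply: eq_bigr => i _; rewrite mxE. Qed.

Lemma dotC {R : realType} {n : nat} (u v : 'cV[R]_n) : dot u v = dot v u.
Proof. by apply: eq_bigr => i _; rewrite mulrC. Qed.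

Lemma dotDr {R : realType} {n : nat} (u v w : 'cV[R]_n) :
  dot u (v + w) = dot u v + dot u w.
Proof. by rewrite /dot -big_split; apply: eq_bigr => i _; rewrite mxE mulrDr. Qed.

Lemma dotBr {R : realType} {n : nat} (u v w : 'cV[R]_n) :
  dot u (v - w) = dot u v - dot u w.
Proof.
rewrite /dot -sumrB; apply: eq_bigr => i _; rewrite !mxE mulrBr //.
Qed.

Lemma dotZr {R : realType} {n : nat} (c : R) (u v : 'cV[R]_n) :
  dot u (c *: v) = c * dot u v.
Proof. by rewrite /dot mulr_sumr; apply: eq_bigr => i _; rewrite mxE mulrCA. Qed.

Lemma dotDl {R : realType} {n : nat} (u v w : 'cV[R]_n) :
  dot (v + w) u = dot v u + dot w u.
Proof. by rewrite dotC dotDr !(dotC u). Qed.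

Lemma dotBl {R : realType} {n : nat} (u v w : 'cV[R]_n) :
  dot (v - w) u = dot v u - dot w u.
Proof. by rewrite dotC dotBr !(dotC u). Qed.

Lemma dotZl {R : realType} {n : nat} (c : R) (u v : 'cV[R]_n) :
  dot (c *: v) u = c * dot v u.
Proof. by rewrite dotC dotZr dotC. Qed.

Lemma dot_mull {R : realType} {n : nat} (A : 'M[R]_n) (u v : 'cV[R]_n) :
  dot (A *m u) v = dot u (A^T *m v).
Proof. by rewrite !dot_mxE trmx_mul mulmxA. Qed.

Lemma dot_ge0 {R : realType} {n : nat} (u : 'cV[R]_n) : 0 <= dot u u.
Proof. by apply: sumr_ge0 => i _; rewrite -expr2 sqr_ge0. Qed.

Lemma vnormE {R : realType} {n : nat} (u : 'cV[R]_n) : vnorm u ^+ 2 = dot u u.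
Proof.
rewrite /vnorm sqr_sqrtr; first by apply: eq_bigr => i _; rewrite expr2.
by apply: sumr_ge0 => i _; rewrite sqr_ge0.
Qed.

Lemma vnorm_dot {R : realType} {n : nat} (u : 'cV[R]_n) : vnorm u = Num.sqrt (dot u u).
Proof. by rewrite /vnorm /dot; congr Num.sqrt; apply: eq_bigr => i _; rewrite expr2. Qed.

Lemma vnorm_ge0 {R : realType} {n : nat} (u : 'cV[R]_n) : 0 <= vnorm u.
Proof. exact: sqrtr_ge0. Qed.

Lemma vnorm_le {R : realType} {n m : nat} (u : 'cV[R]_n) (v : 'cV[R]_m) :
  dot u u <= dot v v -> vnorm u <= vnorm v.
Proof. by move=> h; rewrite !vnorm_dot ler_sqrt // dot_ge0. Qed.

Lemma vnormZ {R : realType} {n : nat} (c : R) (u : 'cV[R]_n) :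
  vnorm (c *: u) = `|c| * vnorm u.
Proof.
rewrite !vnorm_dot dotZl dotZr mulrA sqrtrM ?mul_self_ge0 ?dot_ge0 //.
  by rewrite -expr2 sqrtr_sqr.
by rewrite -expr2 sqr_ge0.
Qed.

Lemma CS2 {R : realType} {n : nat} (u v : 'cV[R]_n) :
  dot u v ^+ 2 <= dot u u * dot v v.
Proof.
have [c0|cpos] := eqVneq (dot v v) 0.
  have v0 : forall i, v i 0 = 0.
    move=> i; move/eqP: c0; rewrite psumr_eq0; last by move=> j _; rewrite -expr2 sqr_ge0.
    by move/allP/(_ i (mem_index_enum _)); rewrite -expr2 sqrf_eq0 => /eqP.
  have -> : dot u v = 0 by rewrite /dot big1 // => i _; rewrite v0 mulr0.
  by rewrite c0 expr0n mulr0.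
have cp : 0 < dot v v by rewrite lt_neqAle eq_sym cpos dot_ge0.
set t := dot u v / dot v v.
have := dot_ge0 (u - t *: v).
rewrite dotBl !dotBr !dotZl !dotZr (dotC v u).
rewrite /t => h.
have : 0 <= dot v v * (dot u u - dot u v ^+ 2 / dot v v).
  apply: mulr_ge0; first exact: ltW.
  move: h; set a := dot u u; set b := dot u v; set c := dot v v.
  have -> : a - b / c * b - (b / c * b - b / c * (b / c * c)) = a - b ^+ 2 / c.
    by field; rewrite /c; exact: lt0r_neq0.
  done.
rewrite mulrBr mulrCA divff ?mulr1; last exact: lt0r_neq0.
by rewrite subr_ge0 mulrC.
Qed.

Lemma CS {R : realType} {n : nat} (u v : 'cV[R]_n) :
  `|dot u v| <= vnorm u * vnorm v.
Proof.
rewrite !vnorm_dot -sqrtrM ?dot_ge0 // -(sqrtr_sqr (dot u v)) ler_sqrt.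
  exact: CS2.
by rewrite mulr_ge0 ?dot_ge0.
Qed.

Lemma dot0r {R : realType} {n : nat} (u : 'cV[R]_n) : dot u 0 = 0.
Proof. by rewrite /dot big1 // => i _; rewrite mxE mulr0. Qed.

Local Open Scope classical_set_scope.
Lemma entry_le_vnorm {R : realType} {n : nat} (x : 'cV[R]_n) i :
  `|x i 0| <= vnorm x.
Proof.
rewrite /vnorm -sqrtr_sqr ler_sqrt; last by apply: sumr_ge0 => j _; rewrite sqr_ge0.
rewrite (bigD1 i) //= lerDl; apply: sumr_ge0 => j _; exact: sqr_ge0.
Qed.

Lemma opset_ub {R : realType} {m n : nat} (A : 'M[R]_(m, n)) :
  has_ubound [set vnorm (A *m x) | x in [set x : 'cV[R]_n | vnorm x <= 1]].
Proof.
exists (Num.sqrt (\sum_(i < m) (\sum_(j < n) `|A i j|) ^+ 2)).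
move=> _ [x /= hx <-].
rewrite /vnorm ler_sqrt; last by apply: sumr_ge0 => j _; rewrite sqr_ge0.
apply: ler_sum => i _.
rewrite -real_normK ?num_real // ler_sqr ?nnegrE ?normr_ge0 //; last first.
  by apply: sumr_ge0 => j _; exact: normr_ge0.
rewrite mxE; apply: le_trans (ler_norm_sum _ _ _) _.
apply: ler_sum => j _; rewrite normrM.
rewrite -[leRHS]mulr1; apply: ler_wpM2l; first exact: normr_ge0.
exact: le_trans (entry_le_vnorm x j) hx.
Qed.

Lemma vnorm0 {R : realType} {n : nat} : vnorm (0 : 'cV[R]_n) = 0.
Proof. by rewrite /vnorm big1 ?sqrtr0 // => i _; rewrite mxE expr0n. Qed.

Lemma opnorm_ub1 {R : realType} {m n : nat} (A : 'M[R]_(m, n)) (x : 'cV[R]_n) :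
  vnorm x <= 1 -> vnorm (A *m x) <= opnorm A.
Proof. by move=> hx; apply: (ub_le_sup (opset_ub A)); exists x. Qed.

Lemma opnorm_ge0 {R : realType} {m n : nat} (A : 'M[R]_(m, n)) : 0 <= opnorm A.
Proof.
have := opnorm_ub1 A (0 : 'cV[R]_n); rewrite mulmx0 !vnorm0; apply.
exact: ler01.
Qed.

Lemma opnorm_ub {R : realType} {m n : nat} (A : 'M[R]_(m, n)) (x : 'cV[R]_n) :
  vnorm (A *m x) <= opnorm A * vnorm x.
Proof.
have [h0|hpos] := eqVneq (vnorm x) 0.
  have -> : x = 0.
    apply/matrixP => i j; rewrite (ord1 j) mxE; apply/eqP.
    by rewrite -normr_le0 -h0 entry_le_vnorm.
  by rewrite mulmx0 !vnorm0 mulr0.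
have xp : 0 < vnorm x by rewrite lt_neqAle eq_sym hpos vnorm_ge0.
have := opnorm_ub1 A ((vnorm x)^-1 *: x).
rewrite vnormZ -scalemxAr vnormZ ger0_norm ?invr_ge0 ?vnorm_ge0 //.
rewrite mulVf ?hpos // lexx => /(_ isT).
by rewrite -(ler_pM2r xp) mulrAC mulVf ?mul1r.
Qed.

Lemma opnorm_le {R : realType} {m n : nat} (A : 'M[R]_(m, n)) (c : R) :
  (forall x : 'cV[R]_n, vnorm x <= 1 -> vnorm (A *m x) <= c) -> opnorm A <= c.
Proof.
move=> h; apply: ge_sup.
  by exists (vnorm (A *m 0)); exists 0 => //=; rewrite vnorm0 ler01.
by move=> _ [x /= hx <-]; exact: h.
Qed.

Lemma proj_le {R : realType} {n : nat} (P : 'M[R]_n) (v : 'cV[R]_n) :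
  P^T = P -> P *m P = P -> vnorm (P *m v) <= vnorm v.
Proof.
move=> hT hP; apply: vnorm_le.
have h1 : dot (P *m v) (P *m v) = dot v (P *m v) by rewrite dot_mull mulmxA hT hP.
have h2 : dot ((1%:M - P) *m v) ((1%:M - P) *m v) = dot v v - dot v (P *m v).
  have hT' : (1%:M - P)^T = 1%:M - P by rewrite [LHS]raddfB /= trmx1 hT.
  rewrite dot_mull mulmxA hT' mulmxBl !mulmxBr mul1mx mulmx1 hP subrr subr0.
  by rewrite mul1mx mulmxBl mul1mx dotBr.
rewrite h1 -subr_ge0 -h2; exact: dot_ge0.
Qed.

Local Close Scope classical_set_scope.
Lemma arith {R : realType} (ny nz nx e k : R) :
  0 <= ny -> 0 <= nz -> nz <= nx -> nx <= 1 -> 0 <= e -> 0 <= k ->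
  nx <= k * nx -> ny <= k * nz -> ny ^+ 2 <= e * ny ^+ 2 + e * ny * nz ->
  ny <= (1 + k ^+ 2) * e.
Proof.
move=> hy hz hzx hx1 he hk hkx hyk hq.
have hk2 : k <= (1 + k ^+ 2) / 2.
  have : 0 <= (k - 1) ^+ 2 by exact: sqr_ge0.
  lra.
have [he2|he2] := leP (1/2) e.
  have : ny <= k by nra.
  have : (1 + k ^+ 2) / 2 <= (1 + k ^+ 2) * e by nra.
  lra.
have [y0|ypos] := eqVneq ny 0.
  by rewrite y0 mulr_ge0 // addr_ge0 ?sqr_ge0.
have yp : 0 < ny by rewrite lt_neqAle eq_sym ypos.
have h1 : ny * (1 - e) <= e * nz.
  have : ny * (ny * (1 - e)) <= ny * (e * nz) by nra.
  by rewrite ler_pM2l.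
have h2 : ny <= 2 * e * nx by nra.
have [x0|xpos] := eqVneq nx 0.
  rewrite x0 mulr0 in h2; apply: (le_trans h2); rewrite mulr_ge0 // addr_ge0 ?sqr_ge0 //.
have xp : 0 < nx by rewrite lt_neqAle eq_sym xpos; exact: le_trans hz hzx.
have k1 : 1 <= k.
  by rewrite -(ler_pM2r xp) mul1r.
nra.
Qed.

Theorem mainTheorem6 (R : realType) (d k : nat)
  (V : 'M[R]_(d, k)) (theta Phat : 'M[R]_d) :
  V^T *m V = 1%:M ->
  theta \in unitmx ->
  is_orth_proj Phat (theta *m V) ->
  opnorm (invmx theta *m Phat *m theta - V *m V^T)
    <= (1 + cond theta ^+ 2) * opnorm (1%:M - theta^T *m theta).
Proof.
move=> hV hU [hPT hPP /andP[h1 h2]].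
have [D hD] := submxP h1.
have [C hC] := submxP h2.
have F1 : Phat *m (theta *m V) = theta *m V.
  have -> : theta *m V = Phat *m C^T by rewrite -[theta *m V]trmxK hC trmx_mul trmxK.
  by rewrite mulmxA hPP.
have F2 : Phat = theta *m V *m D^T by rewrite -[Phat]trmxK hD trmx_mul trmxK.
set Q := invmx theta *m Phat *m theta.
set P := V *m V^T.
have hPsym : P^T = P by rewrite /P trmx_mul trmxK.
have hPid : P *m P = P by rewrite /P mulmxA -(mulmxA V) hV mulmx1.
have hQP : Q *m P = P.
  by rewrite /Q /P -!mulmxA (mulmxA theta) (mulmxA Phat) F1 -mulmxA mulKmx.
have hQ : Q = V *m (D^T *m theta).
  by rewrite /Q F2 -!mulmxA mulKmx.
have hPQ : P *m Q = Q.
  by rewrite hQ /P -!mulmxA (mulmxA V^T) hV mul1mx.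
have hM : Q - P = Q *m (1%:M - P) by rewrite mulmxBr mulmx1 hQP.
have h1P_sym : (1%:M - P)^T = 1%:M - P by rewrite [LHS]raddfB /= trmx1 hPsym.
have h1P_id : (1%:M - P) *m (1%:M - P) = 1%:M - P.
  by rewrite mulmxBl !mulmxBr !mul1mx mulmx1 hPid subrr subr0.
set E := 1%:M - theta^T *m theta.
apply: opnorm_le => x hx.
set z := (1%:M - P) *m x.
have hy : (Q - P) *m x = Q *m z by rewrite hM -mulmxA.
rewrite hy.
set y := Q *m z.
have hPy : P *m y = y by rewrite /y mulmxA hPQ.
have hz : vnorm z <= vnorm x by exact: proj_le.
have hyz : dot y z = 0.
  rewrite -hPy dot_mull hPsym /z mulmxA mulmxBr mulmx1 hPid subrr mul0mx.
  by rewrite dot0r.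
have hty : theta *m y = Phat *m (theta *m z).
  by rewrite /y /Q -!mulmxA mulKVmx.
have key : dot (theta *m y) (theta *m z - theta *m y) = 0.
  rewrite hty dot_mull hPT mulmxBr (mulmxA Phat Phat) hPP subrr.
  by rewrite dot0r.
have G : forall a b : 'cV[R]_d, dot (theta *m a) (theta *m b) = dot a b - dot a (E *m b).
  by move=> a b; rewrite dot_mull /E mulmxBl mul1mx dotBr mulmxA opprB addrC subrK.
rewrite dotBr !G hyz in key.
have bnd : forall w : 'cV[R]_d, `|dot y (E *m w)| <= vnorm y * (opnorm E * vnorm w).
  move=> w; apply: le_trans (CS _ _) _; apply: ler_wpM2l; first exact: vnorm_ge0.
  exact: opnorm_ub.
have hq : vnorm y ^+ 2 <= opnorm E * vnorm y ^+ 2 + opnorm E * vnorm y * vnorm z.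
  have a1 := bnd y; have a2 := bnd z.
  have h3 : vnorm y ^+ 2 = dot y (E *m y) - dot y (E *m z) by rewrite vnormE; lra.
  have h4 : dot y (E *m y) <= vnorm y * (opnorm E * vnorm y) by apply: le_trans (ler_norm _) a1.
  have h5 : - dot y (E *m z) <= vnorm y * (opnorm E * vnorm z).
    by rewrite -normrN in a2; apply: le_trans (ler_norm _) a2.
  rewrite {1}h3. lra.
have hyk : vnorm y <= cond theta * vnorm z.
  rewrite /y /Q -!mulmxA /cond.
  apply: le_trans (opnorm_ub _ _) _.
  rewrite (mulrC (opnorm theta)) -mulrA; apply: ler_wpM2l; first exact: opnorm_ge0.
  apply: le_trans (proj_le _ _ hPT hPP) _.
  exact: opnorm_ub.
have hxk : vnorm x <= cond theta * vnorm x.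
  rewrite -{1}(mulKmx hU x) /cond.
  apply: le_trans (opnorm_ub _ _) _.
  rewrite (mulrC (opnorm theta)) -mulrA; apply: ler_wpM2l; first exact: opnorm_ge0.
  exact: opnorm_ub.
apply: (arith (vnorm y) (vnorm z) (vnorm x)) => //.
- exact: vnorm_ge0.
- exact: vnorm_ge0.
- exact: opnorm_ge0.
- by rewrite /cond mulr_ge0 ?opnorm_ge0.
Qed.
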